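(* Let $m,n\in\mathbb{N}_0$ with $m>n$, and let \[ \mathcal{F}_{m,n}=\{p(x)+\ln(x)q(x):\ p\in\Pi_m,\ q\in\Pi_n\}, \] considered as functions on $(1,\infty)$. Then every nonzero $f\in\mathcal{F}_{m,n}$ has at most $m+n+1$ distinct zeros in $(1,\infty)$.
   Context: $\Pi_n$ denotes the space of real polynomials of degree at most $n$. *)

(* Defs.v *)
From HB Require Import structures.
From mathcomp Require Import all_boot all_order all_algebra.
From mathcomp Require Import all_classical all_reals all_analysis.
Set Implicit Arguments. Unset Strict Implicit. Unset Printing Implicit Defensive.
Import Order.TTheory GRing.Theory Num.Theory.
Local Open Scope ring_scope.

Definition plnq (R : realType) (p q : {poly R}) (x : R) : R :=
  p.[x] + ln x * q.[x].

(* Main.v *)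
Require Import Defs.
From HB Require Import structures.
From mathcomp Require Import all_boot all_order all_algebra.
From mathcomp Require Import all_classical all_reals all_analysis.
From mathcomp Require Import ring lra.
Import Order.TTheory GRing.Theory Num.Theory.
Local Open Scope ring_scope.

Section Aux.
Variable R : realType.

Lemma rolle_path (g g' : R -> R) :
  (forall x : R, 1 < x -> is_derive x (1:R) g (g' x)) ->
  forall (l : seq R) (x : R), 1 < x -> g x = 0 -> path <%R x l -> (forall y, y \in l -> g y = 0) ->
  exists t : seq R, [/\ size t = size l, path <%R x t &
     forall y, y \in t -> g' y = 0].
Proof.
move=> dg; elim=> [|y l IH] x x1 gx /=.
  by move=> _ _; exists [::].
move=> /andP[xy pl] gl.
have y1 : 1 < y by apply: lt_trans xy.
have [t [st pt gt]] := IH y y1 (gl y (mem_head _ _)) pl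
   (fun z zl => gl z (@mem_behead _ (y :: l) _ zl)).
have [c cxy dc] : exists2 c, c \in `]x, y[ & is_derive c 1 g 0.
  apply: Rolle => //.
  - move=> z zi; apply: ex_derive; apply: dg.
    by apply: lt_trans x1 _; rewrite (itvP zi).
  - apply: derivable_within_continuous => z zi; apply: ex_derive; apply: dg.
    by apply: lt_le_trans x1 _; rewrite (itvP zi).
  - by rewrite gx gl ?mem_head.
exists (c :: t); split => /=; first by rewrite st.
- rewrite (itvP cxy) /=; apply: path_le pt; first exact: lt_trans.
  by rewrite (itvP cxy).
- move=> z; rewrite inE => /orP[/eqP ->|]; last exact: gt.
  have c1 : 1 < c by apply: lt_trans x1 _; rewrite (itvP cxy).
  have := dg c c1; move=> D.
  case: D => _ E1; case: dc => _ E2.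
  by rewrite -E1 E2.
Qed.

Lemma rolle_seq (g g' : R -> R) (s : seq R) :
  (forall x : R, 1 < x -> is_derive x (1:R) g (g' x)) -> uniq s ->
  (forall x, x \in s -> 1 < x /\ g x = 0) ->
  exists t : seq R, [/\ uniq t, size t = (size s).-1 &
     forall y, y \in t -> 1 < y /\ g' y = 0].
Proof.
move=> dg us zs.
have ss : sorted <%R (sort <=%R s) by rewrite sort_lt_sorted.
have ms : forall x, x \in sort <=%R s -> 1 < x /\ g x = 0.
  by move=> x; rewrite mem_sort; apply: zs.
rewrite -(size_sort <=%R s).
move: ss ms; case: (sort <=%R s) => [|x l] /=.
  by move=> _ _; exists [::].
move=> pl zl.
have [x1 gx] := zl x (mem_head _ _).
have [t [st pt gt]] := @rolle_path g g' dg l x x1 gx pl (fun y yl => (zl y (@mem_behead _ (x :: l) _ yl)).2).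
exists t; split => //.
- exact: (lt_sorted_uniq (path_sorted pt)).
- move=> y yt; split; last exact: gt.
  apply: lt_trans x1 _.
  have := pt; rewrite (path_sortedE lt_trans) => /andP[/allP H _].
  exact: H.
Qed.
Definition thp (m : nat) (p q : {poly R}) := 'X * p^`() - m%:R *: p + q.
Definition thq (m : nat) (q : {poly R}) := 'X * q^`() - m%:R *: q.

Lemma deriv_plnq (p q : {poly R}) (x : R) : 0 < x ->
  is_derive x (1:R) (plnq p q) (p^`().[x] + (ln x * q^`().[x] + q.[x] * x^-1)).
Proof.
move=> x0.
have -> : plnq p q = (horner p + ((@ln R) * horner q))%R.
  by apply/funext => y.
apply: is_deriveD.
have := is_deriveM (is_derive1_ln x0) (is_derive_poly q x).
by [].
Qed.

Lemma deriv_weight (p q : {poly R}) (m : nat) (x : R) : 0 < x ->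
  is_derive x (1:R) (fun y => plnq p q y / y ^+ m)
     (plnq (thp m p q) (thq m q) x / x ^+ m.+1).
Proof.
move=> x0.
have xm : ('X^m : {poly R}).[x] != 0 by rewrite hornerXn expf_neq0 // gt_eqF.
have H2 := @is_deriveV R (horner 'X^m) x _ 1 xm (is_derive_poly _ _).
have H3 := is_deriveM (@deriv_plnq p q x x0) H2.
have -> : (fun y => plnq p q y / y ^+ m) = (plnq p q * (fun y => (horner 'X^m y)^-1))%R.
  by apply/funext => y /=; rewrite !fctE hornerXn.
eapply is_derive_eq; first exact H3.
rewrite /plnq /thp /thq !hornerE /= derivXn hornerMn hornerXn.
have xn0 : x != 0 by rewrite gt_eqF.
clear H2 H3; case: m xm => [|k] xm /=.
  rewrite !expr0 mulr0n /GRing.scale /=.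
  by field.
rewrite /GRing.scale /= -mulr_natr.
have xk : x ^+ k != 0 by rewrite expf_neq0.
rewrite !exprS.
by field; rewrite xk xn0.
Qed.

Lemma coef_th (r : {poly R}) (m j : nat) : (j = m \/ r`_j = 0) ->
  ('X * r^`() - m%:R *: r)`_j = 0.
Proof.
move=> H; rewrite coefB coefXM coefZ.
case: j H => [|j] H /=.
  by case: H => [<-|->]; rewrite ?mul0r ?mulr0 subrr.
rewrite coef_deriv.
case: H => [<-|->]; last by rewrite mul0rn mulr0 subr0.
by rewrite mulr_natl subrr.
Qed.

Lemma weight_const (g g' : R -> R) :
  (forall x : R, 1 < x -> is_derive x (1:R) g (g' x)) ->
  (forall x : R, 1 < x -> g' x = 0) ->
  forall a b : R, 1 < a -> 1 < b -> g a = g b.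
Proof.
move=> dg g0.
have K : forall a b : R, 1 < a -> a < b -> g a = g b.
  move=> a b a1 ab.
  have [c cab E] : exists2 c, c \in `]a, b[ & g b - g a = g' c * (b - a).
    apply: MVT => //.
    - by move=> z zi; apply: (dg z); apply: (lt_trans a1); rewrite (itvP zi).
    - apply: derivable_within_continuous => z zi; apply: ex_derive; apply: (dg z).
      by apply: lt_le_trans a1 _; rewrite (itvP zi).
  move: E; rewrite g0 ?mul0r; last by apply: (lt_trans a1); rewrite (itvP cab).
  by move/eqP; rewrite subr_eq0 => /eqP.
move=> a b a1 b1.
case: (ltgtP a b) => [ab|ba|->] //; first exact: K.
by apply/esym/K.
Qed.

Lemma main_ind (k : nat) : forall (m n' : nat) (p q : {poly R}) (s : seq R),
  (m + n')%N = k -> (n' <= m.+1)%N -> (size p <= m.+1)%N -> (size q <= n')%N ->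
  (exists x : R, 1 < x /\ plnq p q x != 0) -> uniq s ->
  (forall x, x \in s -> 1 < x /\ plnq p q x = 0) -> (size s <= m + n')%N.
Proof.
elim/ltn_ind: k => k IH m n' p q s Ek Hn Hp Hq Hnz us zs.
case: s us zs => [|z s'] us zs; first by [].
set g := fun y : R => plnq p q y / y ^+ m.
set g' := fun y : R => plnq (thp m p q) (thq m q) y / y ^+ m.+1.
have dg : forall x : R, 1 < x -> is_derive x (1:R) g (g' x).
  by move=> x x1; apply: deriv_weight; apply: lt_trans x1.
have zg : forall x, x \in z :: s' -> 1 < x /\ g x = 0.
  by move=> x /zs [x1 H]; split => //; rewrite /g H mul0r.
have [t [ut st zt]] := @rolle_seq g g' (z :: s') dg us zg.
have zt' : forall x, x \in t -> 1 < x /\ plnq (thp m p q) (thq m q) x = 0.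
  move=> x /zt [x1]; rewrite /g' => /eqP; rewrite mulf_eq0 invr_eq0 expf_eq0 /=.
  by rewrite (gt_eqF (lt_trans ltr01 x1)) orbF => /eqP.
case: (pselect (exists x : R, 1 < x /\ plnq (thp m p q) (thq m q) x != 0)) => [ne|nne].
- have Hsz : (size (z :: s') = (size t).+1)%N by rewrite st.
  rewrite Hsz.
  case: (leqP n' m) => Hnm.
  + have S1 : (size (thp m p q) <= m)%N.
      apply/leq_sizeP => j mj; rewrite /thp coefD coef_th //.
      * by rewrite add0r; apply/(leq_sizeP _ _ Hq)/(leq_trans Hnm).
      * have [jm|jm|->] := ltngtP j m; [by move: mj; rewrite leqNgt jm
          | by right; apply/(leq_sizeP _ _ Hp) | by left].
    have S2 : (size (thq m q) <= n')%N.
      apply/leq_sizeP => j nj; rewrite /thq coef_th //.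
      by right; apply/(leq_sizeP _ _ Hq).
    case: m Ek Hn Hp Hnm S1 S2 ne zt' {g g' dg zg zt} => [|m] Ek Hn Hp Hnm S1 S2 ne zt'.
      exfalso; case: ne => x [_]; move: S1; rewrite size_poly_leq0 => /eqP ->.
      have : n' = 0%N by case: n' Hnm {Hq S2 Ek Hn}.
      move=> n0; rewrite n0 size_poly_leq0 in S2; move/eqP: S2 => ->.
      by rewrite /plnq !horner0 mulr0 addr0 eqxx.
    have Hlt : (m + n' < k)%N by rewrite -Ek addSn.
    have Hn2 : (n' <= m.+1)%N by [].
    have := IH (m + n')%N Hlt m n' (thp m.+1 p q) (thq m.+1 q) t erefl Hn2 S1 S2 ne ut zt'.
    by rewrite addSn.
  + have n'E : n' = m.+1 by apply/eqP; rewrite eqn_leq Hn Hnm.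
    have S1 : (size (thp m p q) <= m.+1)%N.
      apply/leq_sizeP => j mj; rewrite /thp coefD coef_th.
        by rewrite add0r; apply/(leq_sizeP _ _ Hq); rewrite n'E.
      by right; apply/(leq_sizeP _ _ Hp).
    have S2 : (size (thq m q) <= m)%N.
      apply/leq_sizeP => j mj; rewrite /thq coef_th //.
      have [jm|jm|->] := ltngtP j m; [by move: mj; rewrite leqNgt jm
          | by right; apply/(leq_sizeP _ _ Hq); rewrite n'E | by left].
    have Hlt : (m + m < k)%N by rewrite -Ek n'E addnS.
    have Hn2 : (m <= m.+1)%N by [].
    have := IH (m + m)%N Hlt m m (thp m p q) (thq m q) t erefl Hn2 S1 S2 ne ut zt'.
    by rewrite n'E addnS.
- exfalso.
  have g'0 : forall x : R, 1 < x -> g' x = 0.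
    move=> x x1; rewrite /g'.
    case: (eqVneq (plnq (thp m p q) (thq m q) x) 0) => [->|H]; first by rewrite mul0r.
    by exfalso; apply: nne; exists x.
  case: Hnz => x0 [x01 fx0].
  have [z1 gz] := zg z (mem_head _ _).
  have := @weight_const g g' dg g'0 x0 z x01 z1.
  rewrite gz /g => /eqP; rewrite mulf_eq0 invr_eq0 expf_eq0 (negbTE fx0) /=.
  by rewrite (gt_eqF (lt_trans ltr01 x01)) andbF.
Qed.


End Aux.

Theorem mainTheorem10 (R : realType) (m n : nat) (Hmn : (n < m)%N)
  (p q : {poly R}) (Hp : (size p <= m.+1)%N) (Hq : (size q <= n.+1)%N)
  (Hnz : exists x : R, 1 < x /\ plnq p q x != 0)
  (s : seq R) (Hs_uniq : uniq s)
  (Hs_zero : forall x, x \in s -> 1 < x /\ plnq p q x = 0) :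
  (size s <= m + n + 1)%N.
Proof.
rewrite addn1 -addnS.
apply: (@main_ind R (m + n.+1)%N m n.+1 p q s erefl _ Hp Hq Hnz Hs_uniq Hs_zero).
by apply: ltnW.
Qed.
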